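(* Let $d\ge3$, $n\ge1$, $0\le c<\frac{1}{d(d-1)}$, and let $$\rho(c,0)=\Big(\frac1{2d}-\frac{d-1}2c\Big)\sum_{i=0}^{d-1}|ii\rangle\langle ii|+\frac1{d(d-1)}\sum_{i<j}|\psi^-_{ij}\rangle\langle\psi^-_{ij}|+c\sum_{i<j}|\psi^+_{ij}\rangle\langle\psi^+_{ij}|.$$ Then the null space of $(\rho(c,0)^{PT})^{\otimes n}$ contains no nonzero vector of Schmidt rank less than three of the form $$|\psi\rangle=\sum_{i_1,\dots,i_n=0}^{d-1}a_{i_1\dots i_n}|\Phi_{i_1}\rangle\otimes\cdots\otimes|\Phi_{i_n}\rangle,$$ where $|\Phi_k\rangle=\frac1{\sqrt d}\sum_{j=0}^{d-1}e^{2\pi ijk/d}|jj\rangle$.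
   Context: $|\psi^{\pm}_{ij}\rangle=\frac1{\sqrt2}(|ij\rangle\pm|ji\rangle)$, sums over $0\le i<j\le d-1$. $\rho^{PT}$ is the partial transpose on the second factor of $\mathbb{C}^d\otimes\mathbb{C}^d$. The $n$-fold tensor product acts on $(\mathbb{C}^d\otimes\mathbb{C}^d)^{\otimes n}$, regarded as a bipartite space $(\mathbb{C}^d)^{\otimes n}_A\otimes(\mathbb{C}^d)^{\otimes n}_B$ with the first factor of each copy belonging to $A$; Schmidt rank is with respect to this bipartition. *)

(* Defs.v *)
From HB Require Import structures.
From mathcomp Require Import all_boot all_order all_algebra.
From mathcomp Require Import all_classical all_reals all_analysis.
From mathcomp Require Import complex.
Set Implicit Arguments. Unset Strict Implicit. Unset Printing Implicit Defensive.
Import Order.TTheory GRing.Theory Num.Theory.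
Local Open Scope ring_scope.
Local Open Scope complex_scope.

Section Defs.
Variable R : realType.
Local Notation C := R[i].
Variable d : nat.

(* basis index of C^d (x) C^d : pairs (i,j) standing for |ij> *)
Definition ket2 := ('I_d * 'I_d)%type.

Definition e2 (i j : 'I_d) : ket2 -> C := fun x => ((x.1 == i) && (x.2 == j))%:R.

Definition invsqrt2 : C := ((Num.sqrt (2 : R))^-1)%:C.

Definition psi_plus (i j : 'I_d) : ket2 -> C := fun x => invsqrt2 * (e2 i j x + e2 j i x).
Definition psi_minus (i j : 'I_d) : ket2 -> C := fun x => invsqrt2 * (e2 i j x - e2 j i x).

Definition outer (u v : ket2 -> C) : ket2 -> ket2 -> C :=
  fun x y => u x * Num.conj (v y).

Definition rho (c : R) : ket2 -> ket2 -> C := fun x y =>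
  ((1 / (2 * d%:R) - (d%:R - 1) / 2 * c)%:C * \sum_(i < d) outer (e2 i i) (e2 i i) x y)
  + ((1 / (d%:R * (d%:R - 1)) : R)%:C *
      \sum_(i < d) \sum_(j < d | (i < j)%N) outer (psi_minus i j) (psi_minus i j) x y)
  + (c%:C * \sum_(i < d) \sum_(j < d | (i < j)%N) outer (psi_plus i j) (psi_plus i j) x y).

(* partial transpose on the second tensor factor:
   <ij| M^PT |kl> = <il| M |kj> *)
Definition ptrans (M : ket2 -> ket2 -> C) : ket2 -> ket2 -> C :=
  fun x y => M (x.1, y.2) (y.1, x.2).

Variable n : nat.

(* basis index of (C^d (x) C^d)^{(x) n}, regarded as (C^d)^{(x)n}_A (x) (C^d)^{(x)n}_B:
   an A-multi-index and a B-multi-index (first factor of copy t -> A, second -> B) *)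
Definition idxA := {ffun 'I_n -> 'I_d}.
Definition idx := (idxA * idxA)%type.

Definition tpow (M : ket2 -> ket2 -> C) : idx -> idx -> C := fun x y =>
  \prod_(t < n) M (x.1 t, x.2 t) (y.1 t, y.2 t).

Definition in_null (M : idx -> idx -> C) (psi : idx -> C) : Prop :=
  forall x, \sum_(y : idx) M x y * psi y = 0.

(* Schmidt rank w.r.t. the A|B bipartition: rank of the coefficient matrix psi(a,b) *)
Definition schmidt_rank (psi : idx -> C) : nat :=
  \rank (\matrix_(a < #|idxA|, b < #|idxA|) psi (enum_val a, enum_val b)).

Definition omega : C := cos (2 * pi / d%:R) +i* sin (2 * pi / d%:R).

Definition Phi (k : 'I_d) : ket2 -> C := fun x =>
  ((Num.sqrt (d%:R : R))^-1)%:C * \sum_(j < d) omega ^+ (j * k) * e2 j j x.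

Definition Phi_form (psi : idx -> C) : Prop :=
  exists a : idxA -> C, forall x : idx,
    psi x = \sum_(I : idxA) a I * \prod_(t < n) Phi (I t) (x.1 t, x.2 t).

End Defs.

(* Main.v *)
Require Import Defs.
From HB Require Import structures.
From mathcomp Require Import all_boot all_order all_algebra.
From mathcomp Require Import all_classical all_reals all_analysis.
From mathcomp Require Import complex.
From mathcomp Require Import ring lra zify.
Import Order.TTheory GRing.Theory Num.Theory.
Local Open Scope ring_scope.
Local Open Scope complex_scope.




Lemma conj_realC (R : realType) (x : R) : Num.conj (x%:C) = x%:C.
Proof. rewrite conj_Creal //. by rewrite complex_real. Qed.

Lemma invsqrt2_sq (R : realType) : invsqrt2 R * invsqrt2 R = (2^-1 : R)%:C.
Proof.
rewrite /invsqrt2 -rmorphM -invfM -expr2 sqr_sqrtr //.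
Qed.

Lemma pm_pt (R : realType) d (a b i j : 'I_d) : a != b ->
  @outer R d (psi_minus R i j) (psi_minus R i j) (a,b) (b,a) =
  - (invsqrt2 R * invsqrt2 R) * (((a==i)&&(b==j)) || ((a==j)&&(b==i)))%:R.
Proof.
move=> ab; rewrite /outer /psi_minus /e2 /= rmorphM rmorphB /= !conjC_nat conj_realC.
rewrite [(b == i) && _]andbC [(b == j) && _]andbC.
have : ~~ (((a==i)&&(b==j)) && ((a==j)&&(b==i))).
  apply/negP => /andP[/andP[/eqP ai /eqP bj] /andP[/eqP aj _]].
  by move: ab; rewrite bj -aj eqxx.
case: ((a==i)&&(b==j)); case: ((a==j)&&(b==i)) => //= _.
all: rewrite /=; ring.
Qed.

Lemma pp_pt (R : realType) d (a b i j : 'I_d) : a != b ->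
  @outer R d (psi_plus R i j) (psi_plus R i j) (a,b) (b,a) =
  (invsqrt2 R * invsqrt2 R) * (((a==i)&&(b==j)) || ((a==j)&&(b==i)))%:R.
Proof.
move=> ab; rewrite /outer /psi_plus /e2 /= rmorphM rmorphD /= !conjC_nat conj_realC.
rewrite [(b == i) && _]andbC [(b == j) && _]andbC.
have : ~~ (((a==i)&&(b==j)) && ((a==j)&&(b==i))).
  apply/negP => /andP[/andP[/eqP ai /eqP bj] /andP[/eqP aj _]].
  by move: ab; rewrite bj -aj eqxx.
case: ((a==i)&&(b==j)); case: ((a==j)&&(b==i)) => //= _.
all: rewrite /=; ring.
Qed.

Lemma sum_key_lt (R : realType) d (a b : 'I_d) : (a < b)%N ->
  \sum_(i < d) \sum_(j < d | (i < j)%N)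
     ((((a==i)&&(b==j)) || ((a==j)&&(b==i)))%:R : R[i]) = 1.
Proof.
move=> ab.
have anb : (a != b). by rewrite neq_ltn ab.
rewrite (bigD1 a) //= [X in _ + X]big1 ?addr0.
  rewrite (bigD1 b) //= eqxx eqxx /= big1 ?addr0 // => j /andP[_ jb].
  rewrite eq_sym (negbTE jb) /= [b == a]eq_sym (negbTE anb) andbF //.
move=> i ia; apply: big1 => j ij.
rewrite eq_sym (negbTE ia) /=.
case: eqP => [aj|] //=; case: eqP => [bi|] //=.
by move: ij; rewrite -aj -bi => /(ltn_trans ab); rewrite ltnn.
Qed.

Lemma sum_key (R : realType) d (a b : 'I_d) : a != b ->
  \sum_(i < d) \sum_(j < d | (i < j)%N)
     ((((a==i)&&(b==j)) || ((a==j)&&(b==i)))%:R : R[i]) = 1.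
Proof.
rewrite neq_ltn => /orP[ab|ba]; first exact: sum_key_lt.
rewrite -[RHS](@sum_key_lt R d b a ba); apply: eq_bigr => i _; apply: eq_bigr => j _.
by case: (a==i); case: (b==j); case: (a==j); case: (b==i).
Qed.




Lemma rho_diag (R : realType) d (c : R) (a : 'I_d) :
  ptrans (@rho R d c) (a,a) (a,a) = (1 / (2 * d%:R) - (d%:R - 1) / 2 * c)%:C.
Proof.
rewrite /ptrans /rho /=.
rewrite (bigD1 a) //= big1 => [|i ia]; last first.
  by rewrite /outer /e2 /= eq_sym (negbTE ia) mul0r.
rewrite [X in _ + _ * X + _]big1 => [|i _]; last first.
  apply: big1 => j _.
  by rewrite /outer /psi_minus /e2 /= [(a==j) && _]andbC subrr mulr0 mul0r.
rewrite [X in _ + _ * X]big1 => [|i _]; last first.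
  apply: big1 => j ij.
  rewrite /outer /psi_plus /e2 /=.
  have -> : (a == i) && (a == j) = false.
    case: eqP => // ai; case: eqP => // aj.
    by move: ij; rewrite -ai -aj ltnn.
  have -> : (a == j) && (a == i) = false.
    case: eqP => // ai; case: eqP => // aj.
    by move: ij; rewrite -ai -aj ltnn.
  by rewrite addr0 mulr0 mul0r.
rewrite /outer /e2 /= eqxx /= conjC_nat.
by rewrite !mulr0 !addr0 mulr1 mulr1.
Qed.

Lemma rho_off (R : realType) d (c : R) (a b : 'I_d) : a != b ->
  ptrans (@rho R d c) (a,a) (b,b) = ((c - 1 / (d%:R * (d%:R - 1))) / 2)%:C.
Proof.
move=> ab; rewrite /ptrans /rho /=.
rewrite big1 => [|i _]; last first.
  rewrite /outer /e2 /=.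
  have -> : (a == i) && (b == i) = false.
    case: eqP => // ai; case: eqP => // bi.
    by move: ab; rewrite ai bi eqxx.
  by rewrite mul0r.
under eq_bigr => i _ do under eq_bigr => j _ do rewrite pm_pt //.
under [X in _ + _ * X]eq_bigr => i _ do under eq_bigr => j _ do rewrite pp_pt //.
under eq_bigr => i _ do rewrite -big_distrr /=.
under [X in _ + _ * X]eq_bigr => i _ do rewrite -big_distrr /=.
rewrite -!big_distrr /= !sum_key // invsqrt2_sq mulr0 add0r !mulr1.
rewrite -rmorphN -!rmorphM -rmorphD; congr (_%:C).
by rewrite mulrN; ring.
Qed.




Lemma rank_mxsub (F : fieldType) m n m' n' (f : 'I_m' -> 'I_m) (g : 'I_n' -> 'I_n)
  (M : 'M[F]_(m, n)) : (\rank (mxsub f g M) <= \rank M)%N.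
Proof.
have -> : mxsub f g M = mxsub f g (1%:M *m (M *m 1%:M)) by rewrite mul1mx mulmx1.
rewrite mxsub_mul; apply: leq_trans (mxrankM_maxr _ _) _.
rewrite mxsub_mul; apply: leq_trans (mxrankM_maxl _ _) _.
by rewrite [rowsub _ _]mxsub_id.
Qed.

Lemma offdiag (R : realType) d n (psi : idx d n -> R[i]) :
  Phi_form psi -> forall x : idx d n, x.1 != x.2 -> psi x = 0.
Proof.
case=> a Ha x nx; rewrite Ha big1 // => I _.
have : ~~ [forall t, x.1 t == x.2 t].
  apply: contra nx => /forallP H; apply/eqP/ffunP => t; exact/eqP/H.
rewrite negb_forall => /existsP[t ht].
rewrite (bigD1 t) //= /Phi big1 ?mulr0 ?mul0r ?mulr0 // => j _.
rewrite /e2 /=.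
have -> : (x.1 t == j) && (x.2 t == j) = false.
  case: eqP => // e1; case: eqP => // e2.
  by move: ht; rewrite e1 e2 eqxx.
by rewrite mulr0.
Qed.

Lemma null_reduce (R : realType) d n (M : ket2 d -> ket2 d -> R[i]) (psi : idx d n -> R[i]) :
  in_null (tpow M) psi -> (forall x : idx d n, x.1 != x.2 -> psi x = 0) ->
  forall u : idxA d n,
   \sum_(v : idxA d n) (\prod_(t < n) M (u t, u t) (v t, v t)) * psi (v, v) = 0.
Proof.
move=> H off u; have := H (u, u).
have -> : \sum_(y : idx d n) tpow M (u, u) y * psi y =
   \sum_(v : idxA d n) \sum_(w : idxA d n) tpow M (u, u) (v, w) * psi (v, w).
  rewrite pair_big /=; by apply: eq_big => // -[v w].
move=> h; rewrite -[RHS]h; apply: eq_bigr => v _.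
rewrite [RHS](bigD1 v) //= [X in _ + X]big1 ?addr0 // => w wv.
by rewrite off ?mulr0 //= eq_sym.
Qed.

Lemma triple (R : realType) d n (psi : idx d n -> R[i]) :
  (schmidt_rank psi < 3)%N -> (forall x : idx d n, x.1 != x.2 -> psi x = 0) ->
  forall x y z : idxA d n, x != y -> x != z -> y != z ->
  psi (x, x) = 0 \/ psi (y, y) = 0 \/ psi (z, z) = 0.
Proof.
move=> hr off x y z xy xz yz.
have [hx|hx] := eqVneq (psi (x, x)) 0; first by left.
have [hy|hy] := eqVneq (psi (y, y)) 0; first by right; left.
have [hz|hz] := eqVneq (psi (z, z)) 0; first by right; right.
exfalso.
pose w (i : 'I_3) := nth x [:: x; y; z] i.
have winj : forall i j : 'I_3, i != j -> w i != w j.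
  move=> i j; case: i => [[|[|[|k]]] Hi]; case: j => [[|[|[|l]]] Hj] //= _;
  by rewrite // eq_sym.
have wnz : forall i : 'I_3, psi (w i, w i) != 0.
  by move=> i; case: i => [[|[|[|k]]] Hi].
pose f (i : 'I_3) := enum_rank (w i).
set Mx := (\matrix_(a < #|idxA d n|, b < #|idxA d n|) psi (enum_val a, enum_val b)).
have hB : mxsub f f Mx = diag_mx (\row_i psi (w i, w i)).
  apply/matrixP => i j; rewrite !mxE /f !enum_rankK.
  have [<-|ij] := eqVneq i j; first by rewrite mulr1n.
  by rewrite mulr0n off //= winj.
have : (\rank (mxsub f f Mx) <= \rank Mx)%N by apply: rank_mxsub.
rewrite hB mxrank_unit.
  by move=> h; move: (leq_ltn_trans h hr); rewrite ltnn.
rewrite unitmxE det_diag unitfE; apply/prodf_neq0 => i _; rewrite mxE; exact: wnz.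
Qed.




Lemma core (F : fieldType) d n (P Q : F) (g : idxA d n -> F) (oth : 'I_d -> 'I_d -> 'I_d) :
 (forall a b, (oth a b != a) && (oth a b != b)) -> Q != 0 -> P != Q ->
 (forall u : idxA d n, \sum_(v : idxA d n) (\prod_(t < n) (if u t == v t then P else Q)) * g v = 0) ->
 forall x y, x != y -> (forall v, v != x -> v != y -> g v = 0) -> g x = 0 /\ g y = 0.
Proof.
move=> othP Q0 PQ H x y xy supp.
have red u : \sum_(v : idxA d n) (\prod_(t < n) (if u t == v t then P else Q)) * g v =
   (\prod_(t < n) (if u t == x t then P else Q)) * g x +
   (\prod_(t < n) (if u t == y t then P else Q)) * g y.
  rewrite (bigD1 x) //= (bigD1 y) 1?eq_sym //= [X in _ + (_ + X)]big1 ?addr0 // => v /andP[vx vy].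
  by rewrite supp ?mulr0.
have [s hs] : exists s, x s != y s.
  have : ~~ [forall t, x t == y t].
    apply: contra xy => /forallP Hf; apply/eqP/ffunP => t; exact/eqP/Hf.
  by rewrite negb_forall => /existsP[t ht]; exists t.
pose u0 : idxA d n := [ffun t => oth (x t) (y t)].
have e0 : forall z, (z = x \/ z = y) ->
   \prod_(t < n) (if u0 t == z t then P else Q) = Q ^+ n.
  move=> z hz; rewrite -[in RHS](card_ord n) -prodr_const; apply: eq_bigr => t _.
  rewrite ffunE; have /andP[h1 h2] := othP (x t) (y t).
  by case: hz => ->; rewrite ?(negbTE h1) ?(negbTE h2).
have h0 := H u0; rewrite red (e0 x (or_introl erefl)) (e0 y (or_intror erefl)) in h0.
move/eqP: h0; rewrite -mulrDr mulf_eq0 expf_eq0 (negbTE Q0) andbF /= => h0.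
have gyx : g y = - g x by apply/eqP; rewrite -addr_eq0 addrC.
pose u1 : idxA d n := [ffun t => if t == s then x s else oth (x t) (y t)].
pose K := \prod_(t < n | t != s) Q.
have K0 : K != 0 by apply/prodf_neq0.
have e1 : \prod_(t < n) (if u1 t == x t then P else Q) = P * K.
  rewrite (bigD1 s) //= ffunE eqxx eqxx; congr (_ * _); apply: eq_bigr => t ts.
  rewrite ffunE (negbTE ts); have /andP[h1 h2] := othP (x t) (y t).
  by rewrite (negbTE h1).
have e2 : \prod_(t < n) (if u1 t == y t then P else Q) = Q * K.
  rewrite (bigD1 s) //= ffunE eqxx (negbTE hs); congr (_ * _); apply: eq_bigr => t ts.
  rewrite ffunE (negbTE ts); have /andP[h1 h2] := othP (x t) (y t).
  by rewrite (negbTE h2).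
have h1 := H u1; rewrite red e1 e2 gyx in h1.
have : (P - Q) * K * g x = 0 by rewrite -h1; ring.
move/eqP; rewrite !mulf_eq0 subr_eq0 (negbTE PQ) (negbTE K0) /= => /eqP gx0.
by rewrite gyx gx0 oppr0.
Qed.

Lemma oth_ex d (a b : 'I_d) : (3 <= d)%N -> exists k : 'I_d, (k != a) && (k != b).
Proof.
move=> hd.
have [k [hk [ka kb]]] : exists k, (k < 3)%N /\ k != a /\ k != b.
  case: (eqVneq (nat_of_ord a) 0) => a0; case: (eqVneq (nat_of_ord b) 0) => b0;
  case: (eqVneq (nat_of_ord a) 1) => a1; case: (eqVneq (nat_of_ord b) 1) => b1;
  first [ by exists 0%N; repeat split; lia
        | by exists 1%N; repeat split; lia
        | by exists 2%N; repeat split; lia ].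
have kd : (k < d)%N by apply: leq_trans hk hd.
by exists (Ordinal kd); rewrite -!(inj_eq val_inj) /= ka kb.
Qed.



Lemma coef (R : realType) d (c : R) : (3 <= d)%N -> 0 <= c -> c < 1 / (d%:R * (d%:R - 1)) ->
  ((c - 1 / (d%:R * (d%:R - 1))) / 2) != 0 /\
  (1 / (2 * d%:R) - (d%:R - 1) / 2 * c) != ((c - 1 / (d%:R * (d%:R - 1))) / 2).
Proof.
move=> hd c0 hc.
have D3 : (3 : R) <= d%:R by rewrite (ler_nat R 3 d).
set D : R := d%:R in D3 hc *.
have D1 : 0 < D - 1 by lra.
have D0 : 0 < D by lra.
have DD : 0 < D * (D - 1) by apply: mulr_gt0.
split.
  have hb : 0 < 1 / (D * (D - 1)) by apply: divr_gt0.
  set b := 1 / (D * (D - 1)) in hc hb *.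
  apply/negP => /eqP h; lra.
have key : c * (D * (D - 1)) < 1 by rewrite -ltr_pdivlMr.
have E : (1 / (2 * D) - (D - 1) / 2 * c) - ((c - 1 / (D * (D - 1))) / 2)
   = (1 - c * (D * (D - 1))) / (2 * (D - 1)).
  field; apply/andP; split; apply: lt0r_neq0 => //.
apply/negP => /eqP h.
have : 0 < (1 - c * (D * (D - 1))) / (2 * (D - 1)).
  apply: divr_gt0; first lra.
  apply: mulr_gt0 => //; lra.
by rewrite -E h subrr ltxx.
Qed.




Theorem lemma5 (R : realType) (d n : nat) (c : R) :
  (3 <= d)%N -> (1 <= n)%N -> 0 <= c -> c < 1 / (d%:R * (d%:R - 1)) ->
  forall psi : idx d n -> R[i],
    Phi_form psi -> in_null (@tpow R d n (@ptrans R d (@rho R d c))) psi ->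
    (schmidt_rank psi < 3)%N -> psi = (fun _ => 0).
Proof.
move=> hd hn c0 hc psi hPhi hnull hrank.
have off := @offdiag R d n psi hPhi.
set P : R := 1 / (2 * d%:R) - (d%:R - 1) / 2 * c.
set Q : R := (c - 1 / (d%:R * (d%:R - 1))) / 2.
have [Q0 PQ] := @coef R d c hd c0 hc.
have E : forall a b : 'I_d, ptrans (@rho R d c) (a,a) (b,b) = (if a == b then P%:C else Q%:C).
  move=> a b; case: eqVneq => [<-|ab]; [exact: rho_diag | exact: (@rho_off R d c a b ab)].
have nr := @null_reduce R d n _ psi hnull off.
have nr' : forall u : idxA d n, \sum_(v : idxA d n)
    (\prod_(t < n) (if u t == v t then P%:C else Q%:C)) * psi (v, v) = 0.
  move=> u; rewrite -[RHS](nr u); apply: eq_bigr => v _; congr (_ * _).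
  by apply: eq_bigr => t _; rewrite E.
pose oth (a b : 'I_d) := odflt a [pick k | (k != a) && (k != b)].
have othP : forall a b, (oth a b != a) && (oth a b != b).
  move=> a b; rewrite /oth; case: pickP => [k hk //|H].
  by have [k hk] := @oth_ex d a b hd; rewrite H in hk.
have Q0C : Q%:C != 0.
  by apply: contra Q0 => /eqP h; apply/eqP; apply: complexI; rewrite h.
have PQC : P%:C != Q%:C.
  by apply: contra PQ => /eqP h; apply/eqP; apply: complexI h.
have cr := @core _ d n P%:C Q%:C (fun v => psi (v, v)) oth othP Q0C PQC nr'.
have gall : forall v, psi (v, v) = 0.
  move=> x; case: (eqVneq (psi (x, x)) 0) => // gx; exfalso.
  case: (pickP (fun y => (y != x) && (psi (y, y) != 0))) => [y /andP[yx gy]|H].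
    have supp : forall v, v != x -> v != y -> psi (v, v) = 0.
      move=> v vx vy.
      have := @triple R d n psi hrank off x y v.
      rewrite eq_sym yx eq_sym vx eq_sym vy => /(_ erefl erefl erefl).
      by case=> [h|[h|h]] //; [move: gx | move: gy]; rewrite h eqxx.
    have xy : x != y by rewrite eq_sym.
    have [h _] := cr x y xy supp.
    by move: gx; rewrite h eqxx.
  pose t0 : 'I_n := Ordinal hn.
  pose y : idxA d n := [ffun t => oth (x t) (x t)].
  have xy : x != y.
    apply/negP => /eqP hxy.
    have h : x t0 = y t0 by rewrite hxy.
    rewrite /y ffunE in h.
    by have := othP (x t0) (x t0); rewrite -h eqxx.
  have supp : forall v, v != x -> v != y -> psi (v, v) = 0.
    by move=> v vx _; have := H v; rewrite vx /= => /negbFE/eqP.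
  have [h _] := cr x y xy supp.
  by move: gx; rewrite h eqxx.
apply: funext => -[a b].
case: (eqVneq a b) => [<-|ab]; [exact: gall | exact: off].
Qed.
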